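(* Let $T_1,T_2>0$, $0<\tau<2\min(T_1,T_2)$, $\gamma>0$, and let $R_1=\tau/\sqrt2$, $R_2=R_1+\tau$, $c_0=(T_1+\tau/2+R_1,\,T_2+\tau/2+R_1)$. Define the regions of $\mathbb{R}^2$ (for $p=(p_1,p_2)$): $S_{1,\alpha}=\{T_1+\tfrac\tau2<p_1<T_1+\tfrac\tau2+R_1,\ T_2+\tfrac\tau2<p_2<T_2+\tfrac\tau2+R_1,\ \|p-c_0\|<R_1\}$, $S_{1,1}=\{T_1+\tfrac\tau2<p_1<T_1+\tfrac\tau2+R_1,\ p_2>T_2+\tfrac\tau2+R_1\}$, $S_{1,2}=\{T_2+\tfrac\tau2<p_2<T_2+\tfrac\tau2+R_1,\ p_1>T_1+\tfrac\tau2+R_1\}$, $S_{1,3}=\{p_1>T_1+\tfrac\tau2+R_1,\ p_2>T_2+\tfrac\tau2+R_1\}$, $S_{0,\alpha}=\{p_1\le T_1+\tfrac\tau2+R_1,\ p_2\le T_2+\tfrac\tau2+R_1,\ \|p-c_0\|>R_2\}$, $S_{0,1}=\{p_1\le T_1-\tfrac\tau2,\ p_2>T_2+\tfrac\tau2+R_1\}$, $S_{0,2}=\{p_2\le T_2-\tfrac\tau2,\ p_1>T_1+\tfrac\tau2+R_1\}$, $S_{\tau,\alpha}=\{p_1\le T_1+\tfrac\tau2+R_1,\ p_2\le T_2+\tfrac\tau2+R_1,\ R_1\le\|p-c_0\|\le R_2\}$, $S_{\tau,1}=\{T_1-\tfrac\tau2\le p_1\le T_1+\tfrac\tau2,\ p_2>T_2+\tfrac\tau2+R_1\}$,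 $S_{\tau,2}=\{T_2-\tfrac\tau2\le p_2\le T_2+\tfrac\tau2,\ p_1>T_1+\tfrac\tau2+R_1\}$, and $f_\tau=1$ on $S_{1,\alpha}\cup S_{1,1}\cup S_{1,2}\cup S_{1,3}$, $f_\tau=0$ on $S_{0,\alpha}\cup S_{0,1}\cup S_{0,2}$, $f_\tau(p)=\frac{R_2-\|p-c_0\|}{\tau}$ on $S_{\tau,\alpha}$, $f_\tau(p)=\frac{p_1-(T_1-\tau/2)}{\tau}$ on $S_{\tau,1}$, $f_\tau(p)=\frac{p_2-(T_2-\tau/2)}{\tau}$ on $S_{\tau,2}$. Let $g_E(x,x')=e^{\gamma\|x-x'\|}$ and let $B^*(z)=\sup_{w}\frac{\mathrm{L}_{f_\tau,\infty}(w)}{g_E(z,w)}$ be the $g_E$-smooth sensitivity of $f_\tau$. Then for $z=(z_1,z_2)$: $B^*(z)=\max\left(\frac{1}{T_1+\tau/2-z_1},\frac1\tau e^{-\gamma(T_1-\tau/2-z_1)}\right)$ for $z\in S_{0,1}$; $B^*(z)=\max\left(\frac{1}{T_2+\tau/2-z_2},\frac1\tau e^{-\gamma(T_2-\tau/2-z_2)}\right)$ for $z\in S_{0,2}$; $B^*(z)=\max\left(\frac{1}{\|z-c_0\|-R_1},\frac1\tau e^{-\gamma(\|z-c_0\|-R_2)}\right)$ for $z\in S_{0,\alpha}$; $B^*(z)=\max\left(\frac{1}{z_1-(T_1-\tau/2)},\frac1\tau e^{-\gamma(z_1-(T_1+\tau/2))}\right)$ for $z\in S_{1,1}$; $B^*(z)=\max\left(\frac{1}{z_2-(T_2-\tau/2)},\frac1\tau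 e^{-\gamma(z_2-(T_2+\tau/2))}\right)$ for $z\in S_{1,2}$; $B^*(z)=\max\left(\frac{1}{z_1-(T_1-\tau/2)},\frac1\tau e^{-\gamma(z_1-(T_1+\tau/2))},\frac{1}{z_2-(T_2-\tau/2)},\frac1\tau e^{-\gamma(z_2-(T_2+\tau/2))}\right)$ for $z\in S_{1,3}$; $B^*(z)=\max\left(\frac{1}{R_2-\|z-c_0\|},\frac1\tau e^{-\gamma(R_1-\|z-c_0\|)}\right)$ for $z\in S_{1,\alpha}$; $B^*(z)=\frac1\tau$ for $z\in S_{\tau,1}\cup S_{\tau,2}\cup S_{\tau,\alpha}$.
   Context: $\|\cdot\|$ is the Euclidean norm. $\mathrm{L}_{f,\infty}(w)$ is the infimum of all $K$ such that $|f(w)-f(w')|\le K\|w-w'\|$ for all $w'$ in the domain of $f$; the supremum defining $B^*$ ranges over the domain of $f_\tau$ (the union of the regions above). *)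

(* Defs.v *)
From Stdlib Require Import Reals Lra ClassicalEpsilon.
From Coquelicot Require Import Coquelicot.
Open Scope R_scope.

Definition pt := (R * R)%type.

Definition dist2 (p q : pt) : R :=
  sqrt ((fst p - fst q) ^ 2 + (snd p - snd q) ^ 2).

Section Regions.
Variables T1 T2 tau : R.

Definition Rad1 : R := tau / sqrt 2.
Definition Rad2 : R := Rad1 + tau.
Definition a1 : R := T1 + tau / 2 + Rad1.
Definition a2 : R := T2 + tau / 2 + Rad1.
Definition c0 : pt := (a1, a2).

Definition S1a (p : pt) : Prop :=
  T1 + tau/2 < fst p < a1 /\ T2 + tau/2 < snd p < a2 /\ dist2 p c0 < Rad1.
Definition S11 (p : pt) : Prop := T1 + tau/2 < fst p < a1 /\ snd p > a2.
Definition S12 (p : pt) : Prop := T2 + tau/2 < snd p < a2 /\ fst p > a1.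
Definition S13 (p : pt) : Prop := fst p > a1 /\ snd p > a2.
Definition S0a (p : pt) : Prop := fst p <= a1 /\ snd p <= a2 /\ dist2 p c0 > Rad2.
Definition S01 (p : pt) : Prop := fst p <= T1 - tau/2 /\ snd p > a2.
Definition S02 (p : pt) : Prop := snd p <= T2 - tau/2 /\ fst p > a1.
Definition Sta (p : pt) : Prop :=
  fst p <= a1 /\ snd p <= a2 /\ Rad1 <= dist2 p c0 <= Rad2.
Definition St1 (p : pt) : Prop := T1 - tau/2 <= fst p <= T1 + tau/2 /\ snd p > a2.
Definition St2 (p : pt) : Prop := T2 - tau/2 <= snd p <= T2 + tau/2 /\ fst p > a1.

Definition dom (p : pt) : Prop :=
  S1a p \/ S11 p \/ S12 p \/ S13 p \/ S0a p \/ S01 p \/ S02 p \/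
  Sta p \/ St1 p \/ St2 p.

Definition decP (P : Prop) : bool :=
  if excluded_middle_informative P then true else false.

(* f_tau; the value outside dom is irrelevant (never used) *)
Definition f_tau (p : pt) : R :=
  if decP (S1a p \/ S11 p \/ S12 p \/ S13 p) then 1
  else if decP (S0a p \/ S01 p \/ S02 p) then 0
  else if decP (Sta p) then (Rad2 - dist2 p c0) / tau
  else if decP (St1 p) then (fst p - (T1 - tau/2)) / tau
  else if decP (St2 p) then (snd p - (T2 - tau/2)) / tau
  else 0.
End Regions.

Definition Lip_at (dom : pt -> Prop) (f : pt -> R) (w : pt) : Rbar :=
  Rbar_glb (fun K : Rbar => exists k : R, K = Finite k /\
     forall w', dom w' -> Rabs (f w - f w') <= k * dist2 w w').

Definition gE (gamma : R) (x x' : pt) : R := exp (gamma * dist2 x x').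

Definition smooth_sens (dom : pt -> Prop) (f : pt -> R) (gamma : R) (z : pt)
  : Rbar :=
  Rbar_lub (fun r : Rbar => exists w, dom w /\
     r = Rbar_mult (Lip_at dom f w) (Finite (/ gE gamma z w))).

Definition Bstar (T1 T2 tau gamma : R) (z : pt) : Rbar :=
  smooth_sens (dom T1 T2 tau) (f_tau T1 T2 tau) gamma z.

(* Main.v *)
Require Import Defs.
From Stdlib Require Import Reals Lra Psatz ClassicalEpsilon.
From Coquelicot Require Import Coquelicot.
Open Scope R_scope.

Lemma glb_correct (E : Rbar -> Prop) : Rbar_is_glb E (Rbar_glb E).
Proof. unfold Rbar_glb. destruct (Rbar_ex_glb E) as [l Hl]. exact Hl. Qed.
Lemma lub_correct (E : Rbar -> Prop) : Rbar_is_lub E (Rbar_lub E).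
Proof. unfold Rbar_lub. destruct (Rbar_ex_lub E) as [l Hl]. exact Hl. Qed.

Lemma sqrt_sq_abs x : sqrt (x ^ 2) = Rabs x.
Proof. rewrite <- sqrt_Rsqr_abs. f_equal. unfold Rsqr. ring. Qed.

Lemma dist2_sym p q : dist2 p q = dist2 q p.
Proof. unfold dist2. f_equal. ring. Qed.

Lemma dist2_ge0 p q : 0 <= dist2 p q.
Proof. apply sqrt_pos. Qed.

Lemma dist2_ge1 p q : Rabs (fst p - fst q) <= dist2 p q.
Proof. destruct p as [p1 p2], q as [q1 q2]; unfold dist2; simpl. rewrite <- sqrt_sq_abs. apply sqrt_le_1_alt. pose proof (pow2_ge_0 (p1-q1)); pose proof (pow2_ge_0 (p2-q2)); lra. Qed.

Lemma dist2_ge2 p q : Rabs (snd p - snd q) <= dist2 p q.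
Proof. destruct p as [p1 p2], q as [q1 q2]; unfold dist2; simpl. rewrite <- sqrt_sq_abs. apply sqrt_le_1_alt. pose proof (pow2_ge_0 (p1-q1)); pose proof (pow2_ge_0 (p2-q2)); lra. Qed.

Lemma dist2_h x x' y : dist2 (x, y) (x', y) = Rabs (x - x').
Proof. unfold dist2; simpl. rewrite <- sqrt_sq_abs. f_equal. ring. Qed.

Lemma dist2_v x y y' : dist2 (x, y) (x, y') = Rabs (y - y').
Proof. unfold dist2; simpl. rewrite <- sqrt_sq_abs. f_equal. ring. Qed.

Lemma dist2_self p : dist2 p p = 0.
Proof. unfold dist2. replace ((fst p - fst p) ^ 2 + (snd p - snd p) ^ 2) with 0 by ring. apply sqrt_0. Qed.

Lemma sqrt_le_of_sq a b : 0 <= a -> a ^ 2 <= b -> a <= sqrt b.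
Proof. intros Ha Hb. assert (E : a = sqrt (a^2)) by (rewrite sqrt_sq_abs, Rabs_pos_eq; lra). rewrite E at 1. apply sqrt_le_1_alt. lra. Qed.

Lemma sqrt_sq_facts b : 0 <= b -> 0 <= sqrt b /\ sqrt b ^ 2 = b.
Proof. intros. split. apply sqrt_pos. simpl. rewrite Rmult_1_r. apply sqrt_sqrt. auto. Qed.

Lemma abs_le_of_sq u v : 0 <= v -> u^2 <= v^2 -> Rabs u <= v.
Proof. intros Hv H. rewrite <- sqrt_sq_abs. rewrite <- (Rabs_pos_eq v Hv), <- sqrt_sq_abs.
  apply sqrt_le_1_alt; lra. Qed.

Lemma lagrange y1 y2 w1 w2 : (y1*w1 + y2*w2)^2 <= (y1^2+y2^2)*(w1^2+w2^2).
Proof. pose proof (pow2_ge_0 (y1*w2 - y2*w1)). nra. Qed.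

Lemma sqrt_diff_le x1 x2 y1 y2 :
  Rabs (sqrt (x1^2 + x2^2) - sqrt (y1^2 + y2^2)) <= sqrt ((x1-y1)^2 + (x2-y2)^2).
Proof.
  pose proof (pow2_ge_0 x1). pose proof (pow2_ge_0 x2).
  pose proof (pow2_ge_0 y1). pose proof (pow2_ge_0 y2).
  pose proof (pow2_ge_0 (x1-y1)). pose proof (pow2_ge_0 (x2-y2)).
  destruct (sqrt_sq_facts (x1^2+x2^2)) as [A1 A2]; [lra|].
  destruct (sqrt_sq_facts (y1^2+y2^2)) as [B1 B2]; [lra|].
  destruct (sqrt_sq_facts ((x1-y1)^2+(x2-y2)^2)) as [C1 C2]; [lra|].
  set (A := sqrt (x1^2+x2^2)) in *. set (B := sqrt (y1^2+y2^2)) in *.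
  set (C := sqrt ((x1-y1)^2+(x2-y2)^2)) in *.
  assert (CS1 : Rabs (y1*(x1-y1) + y2*(x2-y2)) <= B*C).
  { apply abs_le_of_sq. nra. replace ((B*C)^2) with (B^2*C^2) by ring. rewrite B2, C2. apply lagrange. }
  assert (CS2 : Rabs (x1*(y1-x1) + x2*(y2-x2)) <= A*C).
  { apply abs_le_of_sq. nra. replace ((A*C)^2) with (A^2*C^2) by ring. rewrite A2.
    rewrite C2. replace ((x1 - y1) ^ 2 + (x2 - y2) ^ 2) with ((y1-x1)^2 + (y2-x2)^2) by ring. apply lagrange. }
  apply Rabs_le. apply Rabs_le_between in CS1. apply Rabs_le_between in CS2.
  assert (HA : A^2 = B^2 + C^2 + 2*(y1*(x1-y1) + y2*(x2-y2))) by (rewrite A2, B2, C2; ring).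
  assert (HB : B^2 = A^2 + C^2 + 2*(x1*(y1-x1) + x2*(y2-x2))) by (rewrite A2, B2, C2; ring).
  split.
  - assert (B^2 <= (A+C)^2) by nra. nra.
  - assert (A^2 <= (B+C)^2) by nra. nra.
Qed.

Definition pos x := Rmax x 0.
Definition sdg b1 b2 (p : pt) :=
  sqrt (pos (b1 - fst p) ^ 2 + pos (b2 - snd p) ^ 2)
  - Rmin (pos (fst p - b1)) (pos (snd p - b2)).

Lemma pos_ge0 x : 0 <= pos x.
Proof. unfold pos, Rmax; destruct Rle_dec; lra. Qed.
Lemma pos_lip x y : Rabs (pos x - pos y) <= Rabs (x - y).
Proof. unfold pos, Rmax; repeat destruct Rle_dec; apply Rabs_le; split_Rabs; lra. Qed.
Lemma pos_of_pos x : 0 <= x -> pos x = x.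
Proof. unfold pos, Rmax; destruct Rle_dec; lra. Qed.
Lemma pos_of_neg x : x <= 0 -> pos x = 0.
Proof. unfold pos, Rmax; destruct Rle_dec; lra. Qed.

Lemma sdg_in b1 b2 p : b1 <= fst p -> b2 <= snd p ->
  sdg b1 b2 p = - Rmin (fst p - b1) (snd p - b2).
Proof.
  intros h1 h2. unfold sdg. rewrite (pos_of_neg (b1 - fst p)) by lra.
  rewrite (pos_of_neg (b2 - snd p)) by lra.
  rewrite (pos_of_pos (fst p - b1)) by lra. rewrite (pos_of_pos (snd p - b2)) by lra.
  replace (0^2+0^2) with 0 by ring. rewrite sqrt_0. ring.
Qed.

Lemma sdg_out b1 b2 p : fst p < b1 \/ snd p < b2 ->
  sdg b1 b2 p = sqrt (pos (b1 - fst p) ^ 2 + pos (b2 - snd p) ^ 2).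
Proof.
  intros h. unfold sdg.
  assert (Rmin (pos (fst p - b1)) (pos (snd p - b2)) = 0).
  { destruct h.
    - rewrite (pos_of_neg (fst p - b1)) by lra. pose proof (pos_ge0 (snd p - b2)).
      unfold Rmin; destruct Rle_dec; lra.
    - rewrite (pos_of_neg (snd p - b2)) by lra. pose proof (pos_ge0 (fst p - b1)).
      unfold Rmin; destruct Rle_dec; lra. }
  rewrite H; ring.
Qed.

Lemma sq_le_of_abs u v : Rabs u <= Rabs v -> u^2 <= v^2.
Proof. intros H. pose proof (Rabs_pos u).
  rewrite <- (pow2_abs u), <- (pow2_abs v). nra. Qed.

Lemma mixed_case b1 b2 p q : (fst p < b1 \/ snd p < b2) -> b1 <= fst q -> b2 <= snd q ->
  sqrt (pos (b1 - fst p) ^ 2 + pos (b2 - snd p) ^ 2) + Rmin (fst q - b1) (snd q - b2)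
  <= dist2 p q.
Proof.
  destruct p as [p1 p2], q as [q1 q2]; cbn [fst snd]. intros h h1 h2. unfold dist2; cbn [fst snd].
  set (m := Rmin (q1 - b1) (q2 - b2)).
  assert (m1 : m <= q1 - b1) by (unfold m, Rmin; destruct Rle_dec; lra).
  assert (m2 : m <= q2 - b2) by (unfold m, Rmin; destruct Rle_dec; lra).
  assert (m0 : 0 <= m) by (unfold m, Rmin; destruct Rle_dec; lra).
  pose proof (pos_ge0 (b1 - p1)). pose proof (pos_ge0 (b2 - p2)).
  set (A := pos (b1 - p1)) in *. set (B := pos (b2 - p2)) in *.
  destruct (sqrt_sq_facts (A^2+B^2)) as [N1 N2]; [pose proof (pow2_ge_0 A); pose proof (pow2_ge_0 B); lra|].
  set (N := sqrt (A^2+B^2)) in *.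
  apply sqrt_le_of_sq. clearbody N. lra.
  destruct (Rlt_or_le p1 b1) as [c1|c1]; destruct (Rlt_or_le p2 b2) as [c2|c2].
  - assert (A = b1 - p1) by (apply pos_of_pos; lra).
    assert (B = b2 - p2) by (apply pos_of_pos; lra).
    assert (N <= A + B) by nra.
    assert ((m+A)^2 <= (p1-q1)^2) by nra.
    assert ((m+B)^2 <= (p2-q2)^2) by nra.
    nra.
  - assert (A = b1 - p1) by (apply pos_of_pos; lra).
    assert (B = 0) by (apply pos_of_neg; lra).
    assert (N = A) by nra.
    assert ((m+A)^2 <= (p1-q1)^2) by nra.
    pose proof (pow2_ge_0 (p2-q2)). nra.
  - assert (A = 0) by (apply pos_of_neg; lra).
    assert (B = b2 - p2) by (apply pos_of_pos; lra).
    assert (N = B) by nra.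
    assert ((m+B)^2 <= (p2-q2)^2) by nra.
    pose proof (pow2_ge_0 (p1-q1)). nra.
  - lra.
Qed.

Lemma out_out b1 b2 p q :
  Rabs (sqrt (pos (b1 - fst p) ^ 2 + pos (b2 - snd p) ^ 2) -
        sqrt (pos (b1 - fst q) ^ 2 + pos (b2 - snd q) ^ 2)) <= dist2 p q.
Proof.
  eapply Rle_trans. apply sqrt_diff_le. unfold dist2. apply sqrt_le_1_alt.
  pose proof (sq_le_of_abs _ _ (pos_lip (b1 - fst p) (b1 - fst q))).
  pose proof (sq_le_of_abs _ _ (pos_lip (b2 - snd p) (b2 - snd q))).
  replace ((b1 - fst p - (b1 - fst q))^2) with ((fst p - fst q)^2) in H by ring.
  replace ((b2 - snd p - (b2 - snd q))^2) with ((snd p - snd q)^2) in H0 by ring.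
  lra.
Qed.

Lemma in_in b1 b2 p q :
  Rabs (- Rmin (fst p - b1) (snd p - b2) - - Rmin (fst q - b1) (snd q - b2)) <= dist2 p q.
Proof.
  pose proof (dist2_ge1 p q). pose proof (dist2_ge2 p q).
  revert H H0. destruct p as [p1 p2], q as [q1 q2]; cbn [fst snd]. intros.
  apply Rabs_le. apply Rabs_le_between in H. apply Rabs_le_between in H0.
  unfold Rmin; repeat destruct Rle_dec; lra.
Qed.

Lemma sdg_lip b1 b2 p q : Rabs (sdg b1 b2 p - sdg b1 b2 q) <= dist2 p q.
Proof.
  assert (Hp : (fst p < b1 \/ snd p < b2) \/ (b1 <= fst p /\ b2 <= snd p)).
  { destruct (Rlt_or_le (fst p) b1); destruct (Rlt_or_le (snd p) b2); tauto. }
  assert (Hq : (fst q < b1 \/ snd q < b2) \/ (b1 <= fst q /\ b2 <= snd q)).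
  { destruct (Rlt_or_le (fst q) b1); destruct (Rlt_or_le (snd q) b2); tauto. }
  destruct Hp as [Hp|[Hp1 Hp2]]; destruct Hq as [Hq|[Hq1 Hq2]].
  - rewrite (sdg_out b1 b2 p Hp), (sdg_out b1 b2 q Hq). apply out_out.
  - rewrite (sdg_out b1 b2 p Hp), (sdg_in b1 b2 q Hq1 Hq2).
    pose proof (mixed_case b1 b2 p q Hp Hq1 Hq2).
    pose proof (sqrt_pos (pos (b1 - fst p) ^ 2 + pos (b2 - snd p) ^ 2)).
    assert (0 <= Rmin (fst q - b1) (snd q - b2)) by (unfold Rmin; destruct Rle_dec; lra).
    rewrite Rabs_pos_eq; lra.
  - rewrite (sdg_in b1 b2 p Hp1 Hp2), (sdg_out b1 b2 q Hq).
    pose proof (mixed_case b1 b2 q p Hq Hp1 Hp2). rewrite dist2_sym.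
    pose proof (sqrt_pos (pos (b1 - fst q) ^ 2 + pos (b2 - snd q) ^ 2)).
    assert (0 <= Rmin (fst p - b1) (snd p - b2)) by (unfold Rmin; destruct Rle_dec; lra).
    rewrite Rabs_left1; lra.
  - rewrite (sdg_in b1 b2 p Hp1 Hp2), (sdg_in b1 b2 q Hq1 Hq2). apply in_in.
Qed.

Lemma Rad1_pos tau : 0 < tau -> 0 < Rad1 tau.
Proof. intros. unfold Rad1. apply Rdiv_lt_0_compat; auto. apply sqrt_lt_R0; lra. Qed.
Lemma Rad2_eq tau : Rad2 tau = Rad1 tau + tau.
Proof. reflexivity. Qed.

Definition F tau s := if Rle_dec s (Rad1 tau) then 1
  else if Rle_dec s (Rad2 tau) then (Rad2 tau - s) / tau else 0.
Definition G tau s := if Rlt_dec s (Rad1 tau) then 1 / (Rad2 tau - s)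
  else if Rle_dec s (Rad2 tau) then 1 / tau else 1 / (s - Rad1 tau).

Lemma F_le tau s : s <= Rad1 tau -> F tau s = 1.
Proof. intros. unfold F. destruct Rle_dec; lra. Qed.
Lemma F_mid tau s : 0 < tau -> Rad1 tau <= s <= Rad2 tau -> F tau s = (Rad2 tau - s) / tau.
Proof. intros. unfold F. rewrite Rad2_eq in *. destruct Rle_dec.
  - assert (s = Rad1 tau) by lra. subst. field. lra.
  - destruct Rle_dec; [auto|lra]. Qed.
Lemma F_ge tau s : 0 < tau -> Rad2 tau <= s -> F tau s = 0.
Proof. intros. pose proof (Rad1_pos tau H). unfold F. rewrite Rad2_eq in *. destruct Rle_dec. lra.
  destruct Rle_dec; [|auto]. assert (s = Rad1 tau + tau) by lra. subst. unfold Rdiv.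
  replace (Rad1 tau + tau - (Rad1 tau + tau)) with 0 by ring. ring. Qed.

Lemma div_le_iff x y c d : 0 < c -> 0 < d -> x * d <= y * c -> x / c <= y / d.
Proof. intros. unfold Rdiv. apply Rmult_le_reg_r with (c*d). nra.
  replace (x * / c * (c * d)) with (x * d) by (field; lra).
  replace (y * / d * (c * d)) with (y * c) by (field; lra). lra. Qed.

Lemma G_pos tau s : 0 < tau -> 0 < G tau s.
Proof. intros. pose proof (Rad1_pos tau H). unfold G. rewrite Rad2_eq.
  repeat destruct Rlt_dec; repeat destruct Rle_dec; unfold Rdiv; rewrite Rmult_1_l;
  apply Rinv_0_lt_compat; lra. Qed.

Lemma abs_div_le x y c d : 0 < c -> 0 < d -> Rabs x * d <= Rabs y * c ->
  Rabs (x / c) <= 1 / d * Rabs y.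
Proof. intros. unfold Rdiv. rewrite Rabs_mult, (Rabs_pos_eq (/c)) by (apply Rlt_le, Rinv_0_lt_compat; lra).
  rewrite Rmult_1_l. apply Rmult_le_reg_r with (c*d). nra.
  replace (Rabs x * / c * (c * d)) with (Rabs x * d) by (field; lra).
  replace (/ d * Rabs y * (c * d)) with (Rabs y * c) by (field; lra). lra. Qed.

Ltac absfin := unfold Rabs; repeat destruct Rcase_abs; nra.

Lemma F_lip tau a b : 0 < tau -> Rabs (F tau a - F tau b) <= G tau a * Rabs (a - b).
Proof.
  intros ht. pose proof (Rad1_pos tau ht). unfold F, G. rewrite Rad2_eq.
  set (r := Rad1 tau) in *. clearbody r.
  destruct (Rlt_dec a r); repeat destruct Rle_dec; try lra.
  all: try (rewrite Rminus_diag, Rabs_R0; apply Rmult_le_pos; [unfold Rdiv; apply Rmult_le_pos; [lra|]; apply Rlt_le, Rinv_0_lt_compat; lra | apply Rabs_pos]).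
  - replace (1 - (r + tau - b) / tau) with ((b-r)/tau) by (field; lra).
    apply abs_div_le; try lra.
    assert ((r-a)*(b-r-tau) <= 0) by nra. absfin.
  - replace (1 - 0) with (1/1) by field. apply abs_div_le; try lra. absfin.
  - replace (1 - (r + tau - b) / tau) with ((b-r)/tau) by (field; lra).
    apply abs_div_le; try lra. absfin.
  - replace (1 - 0) with (1/1) by field. apply abs_div_le; try lra. absfin.
  - replace ((r + tau - a) / tau - 1) with ((r-a)/tau) by (field; lra).
    apply abs_div_le; try lra. absfin.
  - replace ((r + tau - a) / tau - (r + tau - b) / tau) with ((b-a)/tau) by (field; lra).
    apply abs_div_le; try lra. absfin.
  - replace ((r + tau - a) / tau - 0) with ((r+tau-a)/tau) by (field; lra).
    apply abs_div_le; try lra. absfin.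
  - replace (0 - 1) with (-1/1) by field. apply abs_div_le; try lra. absfin.
  - replace (0 - (r + tau - b) / tau) with ((b - r - tau)/tau) by (field; lra).
    apply abs_div_le; try lra.
    assert ((r-b)*(a-r-tau) <= 0) by nra. absfin.
Qed.

Definition sd T1 T2 tau (p : pt) := sdg (a1 T1 tau) (a2 T2 tau) p.

Lemma a1_eq T1 tau : a1 T1 tau = T1 + tau/2 + Rad1 tau.
Proof. reflexivity. Qed.
Lemma a2_eq T2 tau : a2 T2 tau = T2 + tau/2 + Rad1 tau.
Proof. reflexivity. Qed.

Lemma sd_quad T1 T2 tau p : fst p <= a1 T1 tau -> snd p <= a2 T2 tau ->
  sd T1 T2 tau p = dist2 p (c0 T1 T2 tau).
Proof.
  intros h1 h2. unfold sd, dist2, c0. cbn [fst snd].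
  destruct (Rlt_or_le (fst p) (a1 T1 tau)) as [c|c];
  [|destruct (Rlt_or_le (snd p) (a2 T2 tau)) as [c'|c']].
  - rewrite sdg_out by tauto. rewrite !pos_of_pos by lra. f_equal; ring.
  - rewrite sdg_out by tauto. rewrite !pos_of_pos by lra. f_equal; ring.
  - rewrite sdg_in by lra. replace (fst p) with (a1 T1 tau) by lra.
    replace (snd p) with (a2 T2 tau) by lra.
    replace ((a1 T1 tau - a1 T1 tau) ^ 2 + (a2 T2 tau - a2 T2 tau) ^ 2) with 0 by ring.
    rewrite sqrt_0. unfold Rmin. destruct Rle_dec; ring.
Qed.

Lemma sd_left T1 T2 tau p : fst p <= a1 T1 tau -> a2 T2 tau <= snd p ->
  sd T1 T2 tau p = a1 T1 tau - fst p.
Proof.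
  intros h1 h2. unfold sd.
  destruct (Rlt_or_le (fst p) (a1 T1 tau)) as [c|c].
  - rewrite sdg_out by tauto. rewrite (pos_of_pos (a1 T1 tau - fst p)) by lra.
    rewrite (pos_of_neg (a2 T2 tau - snd p)) by lra.
    replace ((a1 T1 tau - fst p) ^ 2 + 0 ^ 2) with ((a1 T1 tau - fst p) ^ 2) by ring.
    rewrite sqrt_sq_abs, Rabs_pos_eq; lra.
  - rewrite sdg_in by lra. unfold Rmin. destruct Rle_dec; lra.
Qed.

Lemma sd_bot T1 T2 tau p : a1 T1 tau <= fst p -> snd p <= a2 T2 tau ->
  sd T1 T2 tau p = a2 T2 tau - snd p.
Proof.
  intros h1 h2. unfold sd.
  destruct (Rlt_or_le (snd p) (a2 T2 tau)) as [c|c].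
  - rewrite sdg_out by tauto. rewrite (pos_of_pos (a2 T2 tau - snd p)) by lra.
    rewrite (pos_of_neg (a1 T1 tau - fst p)) by lra.
    replace (0 ^ 2 + (a2 T2 tau - snd p) ^ 2) with ((a2 T2 tau - snd p) ^ 2) by ring.
    rewrite sqrt_sq_abs, Rabs_pos_eq; lra.
  - rewrite sdg_in by lra. unfold Rmin. destruct Rle_dec; lra.
Qed.

Lemma sd_in T1 T2 tau p : a1 T1 tau <= fst p -> a2 T2 tau <= snd p ->
  sd T1 T2 tau p = - Rmin (fst p - a1 T1 tau) (snd p - a2 T2 tau).
Proof. intros. unfold sd. apply sdg_in; auto. Qed.

Lemma sd_lip T1 T2 tau p q : Rabs (sd T1 T2 tau p - sd T1 T2 tau q) <= dist2 p q.
Proof. apply sdg_lip. Qed.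

Lemma f_eq T1 T2 tau p : 0 < tau -> dom T1 T2 tau p ->
  f_tau T1 T2 tau p = F tau (sd T1 T2 tau p).
Proof.
  intros ht hd. pose proof (Rad1_pos tau ht) as hr.
  pose proof (a1_eq T1 tau). pose proof (a2_eq T2 tau). pose proof (Rad2_eq tau).
  unfold f_tau, decP.
  destruct excluded_middle_informative as [h|h].
  { symmetry. apply F_le.
    destruct h as [h|[h|[h|h]]].
    - destruct h as [[? ?] [[? ?] ?]]. rewrite sd_quad by lra. lra.
    - destruct h as [[? ?] ?]. rewrite sd_left by lra. lra.
    - destruct h as [[? ?] ?]. rewrite sd_bot by lra. lra.
    - destruct h as [? ?]. rewrite sd_in by lra. unfold Rmin; destruct Rle_dec; lra. }
  destruct excluded_middle_informative as [h'|h'].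
  { symmetry. apply F_ge; auto.
    destruct h' as [h'|[h'|h']].
    - destruct h' as [? [? ?]]. rewrite sd_quad by lra. lra.
    - destruct h' as [? ?]. rewrite sd_left by lra. lra.
    - destruct h' as [? ?]. rewrite sd_bot by lra. lra. }
  destruct excluded_middle_informative as [h3|h3].
  { destruct h3 as [? [? ?]]. rewrite sd_quad by lra. rewrite F_mid; auto. }
  destruct excluded_middle_informative as [h4|h4].
  { destruct h4 as [[? ?] ?]. rewrite sd_left by lra. rewrite F_mid by (auto; lra).
    f_equal. lra. }
  destruct excluded_middle_informative as [h5|h5].
  { destruct h5 as [[? ?] ?]. rewrite sd_bot by lra. rewrite F_mid by (auto; lra).
    f_equal. lra. }
  exfalso. unfold dom in hd. tauto.
Qed.

Lemma L_le T1 T2 tau w : 0 < tau -> dom T1 T2 tau w ->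
  Rbar_le (Lip_at (dom T1 T2 tau) (f_tau T1 T2 tau) w) (Finite (G tau (sd T1 T2 tau w))).
Proof.
  intros ht hw. apply (proj1 (glb_correct _)). exists (G tau (sd T1 T2 tau w)). split; auto.
  intros w' hw'. rewrite !f_eq by auto. eapply Rle_trans; [apply F_lip; auto|].
  apply Rmult_le_compat_l. apply Rlt_le, G_pos; auto. apply sd_lip.
Qed.

Lemma L_ge T1 T2 tau w w' : dom T1 T2 tau w' -> 0 < dist2 w w' ->
  Rbar_le (Finite (Rabs (f_tau T1 T2 tau w - f_tau T1 T2 tau w') / dist2 w w'))
          (Lip_at (dom T1 T2 tau) (f_tau T1 T2 tau) w).
Proof.
  intros hw' hd. apply (proj2 (glb_correct _)). intros x [k [-> Hk]]. simpl.
  specialize (Hk w' hw'). unfold Rdiv. apply Rmult_le_reg_r with (dist2 w w'); auto.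
  rewrite Rmult_assoc, Rinv_l by lra. lra.
Qed.

Lemma gE_inv gamma z w : / gE gamma z w = exp (- gamma * dist2 z w).
Proof. unfold gE. rewrite <- exp_Ropp. f_equal. ring. Qed.

Lemma B_le T1 T2 tau gamma z V : 0 < tau ->
  (forall w, dom T1 T2 tau w -> G tau (sd T1 T2 tau w) * exp (- gamma * dist2 z w) <= V) ->
  Rbar_le (Bstar T1 T2 tau gamma z) (Finite V).
Proof.
  intros ht H. apply (proj2 (lub_correct _)). intros x [w [hw ->]].
  pose proof (L_le T1 T2 tau w ht hw) as HL. rewrite gE_inv.
  pose proof (exp_pos (- gamma * dist2 z w)) as he.
  destruct (Lip_at (dom T1 T2 tau) (f_tau T1 T2 tau) w) as [l| |] eqn:E.
  - simpl in *. eapply Rle_trans; [|apply (H w hw)].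
    apply Rmult_le_compat_r; lra.
  - simpl in HL. contradiction.
  - unfold Rbar_mult, Rbar_mult'. destruct Rle_dec; [destruct Rle_lt_or_eq_dec|]; simpl; auto; lra.
Qed.

Lemma B_ge T1 T2 tau gamma z w c : dom T1 T2 tau w ->
  Rbar_le (Finite c) (Lip_at (dom T1 T2 tau) (f_tau T1 T2 tau) w) ->
  Rbar_le (Finite (c * exp (- gamma * dist2 z w))) (Bstar T1 T2 tau gamma z).
Proof.
  intros hw HL.
  assert (Hm : Rbar_le (Rbar_mult (Lip_at (dom T1 T2 tau) (f_tau T1 T2 tau) w) (Finite (/ gE gamma z w)))
      (Bstar T1 T2 tau gamma z)).
  { apply (proj1 (lub_correct _)). exists w. split; auto. }
  rewrite gE_inv in Hm.
  pose proof (exp_pos (- gamma * dist2 z w)) as he.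
  eapply Rbar_le_trans; [|exact Hm].
  destruct (Lip_at (dom T1 T2 tau) (f_tau T1 T2 tau) w) as [l| |] eqn:E.
  - simpl in *. apply Rmult_le_compat_r; lra.
  - unfold Rbar_mult, Rbar_mult'. destruct Rle_dec; [destruct Rle_lt_or_eq_dec|]; simpl; auto; lra.
  - simpl in HL. contradiction.
Qed.

Lemma real_ge T1 T2 tau gamma z w w' : dom T1 T2 tau w -> dom T1 T2 tau w' -> 0 < dist2 w w' ->
  Rbar_le (Finite (Rabs (f_tau T1 T2 tau w - f_tau T1 T2 tau w') / dist2 w w' * exp (- gamma * dist2 z w)))
          (Bstar T1 T2 tau gamma z).
Proof. intros. apply B_ge; auto. apply L_ge; auto. Qed.

Lemma ln_le_sub1 y : 0 < y -> ln y <= y - 1.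
Proof. intros. pose proof (exp_ineq1_le (ln y)). rewrite exp_ln in H0; lra. Qed.

Lemma exp_le x y : x <= y -> exp x <= exp y.
Proof. intros [h|h]. apply Rlt_le, exp_increasing; auto. subst; lra. Qed.
Lemma exp_le_inv x y : exp x <= exp y -> x <= y.
Proof. intros [h|h]. apply Rlt_le, exp_lt_inv; auto. apply exp_inv in h. lra. Qed.

Lemma logconv t A Bv X Ep Eq Ex : 0 <= t <= 1 -> 0 < A -> 0 < Bv ->
  X = (1-t)*A + t*Bv -> Ex = (1-t)*Ep + t*Eq ->
  exp Ex / X <= Rmax (exp Ep / A) (exp Eq / Bv).
Proof.
  intros ht hA hB hX hE.
  assert (hXp : 0 < X) by nra.
  assert (Hln : (1-t) * ln A + t * ln Bv <= ln X).
  { pose proof (ln_le_sub1 (A/X)) as h1. pose proof (ln_le_sub1 (Bv/X)) as h2.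
    assert (0 < A/X) by (apply Rdiv_lt_0_compat; lra).
    assert (0 < Bv/X) by (apply Rdiv_lt_0_compat; lra).
    rewrite ln_div in h1, h2 by lra.
    specialize (h1 H). specialize (h2 H0).
    assert ((1-t)*(A/X) + t*(Bv/X) = 1) by (rewrite hX; field; lra).
    nra. }
  assert (HU : forall e a, 0 < a -> exp e / a = exp (e - ln a)).
  { intros e a ha. unfold Rminus. rewrite exp_plus, exp_Ropp, exp_ln by auto. reflexivity. }
  rewrite !HU by auto.
  unfold Rmax. destruct Rle_dec as [h|h].
  - apply exp_le_inv in h. apply exp_le. nra.
  - assert (Eq - ln Bv < Ep - ln A).
    { destruct (Rle_dec (Eq - ln Bv) (Ep - ln A)) as [h'|h'].
      destruct h'; auto. rewrite H in h. lra. apply Rnot_le_lt in h'. exfalso. apply h.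
      apply Rlt_le. apply exp_increasing; auto. }
    apply exp_le. nra.
Qed.

Lemma one_div_le a b : 0 < a -> a <= b -> 1 / b <= 1 / a.
Proof. intros. unfold Rdiv. rewrite !Rmult_1_l. apply Rinv_le_contravar; auto. Qed.
Lemma one_div_pos a : 0 < a -> 0 < 1 / a.
Proof. intros. unfold Rdiv. rewrite Rmult_1_l. apply Rinv_0_lt_compat; auto. Qed.

Lemma prod_le a b c d : 0 <= a -> 0 <= d -> a <= b -> d <= c -> b * c <= b * c -> a * d <= b * c.
Proof. intros. apply Rmult_le_compat; lra. Qed.

Lemma UpIn tau gamma s s0 : 0 < tau -> 0 < gamma -> s0 <= Rad1 tau ->
  G tau s * exp (- gamma * Rabs (s - s0)) <=
  Rmax (1 / (Rad2 tau - s0)) (1 / tau * exp (- gamma * (Rad1 tau - s0))).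
Proof.
  intros ht hg hs0. pose proof (Rad1_pos tau ht). unfold G. rewrite Rad2_eq.
  set (r := Rad1 tau) in *. clearbody r.
  destruct (Rlt_dec s r) as [c1|c1].
  - destruct (Rle_lt_dec s s0) as [c2|c2].
    + rewrite Rabs_left1 by lra. eapply Rle_trans; [|apply Rmax_l].
      rewrite <- (Rmult_1_r (1 / (r + tau - s0))).
      apply Rmult_le_compat.
      * apply Rlt_le, one_div_pos; lra.
      * apply Rlt_le, exp_pos.
      * apply one_div_le; lra.
      * rewrite <- exp_0. apply exp_le. nra.
    + rewrite Rabs_pos_eq by lra.
      replace (1 / (r + tau - s) * exp (- gamma * (s - s0))) with
        (exp (- gamma * (s - s0)) / (r + tau - s)) by (field; lra).
      replace (1 / (r + tau - s0)) with (exp 0 / (r + tau - s0)) by (rewrite exp_0; reflexivity).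
      replace (1 / tau * exp (- gamma * (r - s0))) with (exp (- gamma * (r - s0)) / tau) by (field; lra).
      apply logconv with (t := (s - s0) / (r - s0)).
      * split. apply Rmult_le_pos; [lra|]. apply Rlt_le, Rinv_0_lt_compat; lra.
        apply Rmult_le_reg_r with (r - s0). lra. unfold Rdiv. rewrite Rmult_assoc, Rinv_l by lra. lra.
      * lra.
      * lra.
      * field. lra.
      * field. lra.
  - destruct (Rle_dec s (r + tau)) as [c2|c2].
    + rewrite Rabs_pos_eq by lra. eapply Rle_trans; [|apply Rmax_r].
      apply Rmult_le_compat_l. apply Rlt_le, one_div_pos; lra.
      apply exp_le. nra.
    + rewrite Rabs_pos_eq by lra. eapply Rle_trans; [|apply Rmax_r].
      apply Rmult_le_compat.
      * apply Rlt_le, one_div_pos; lra.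
      * apply Rlt_le, exp_pos.
      * apply one_div_le; lra.
      * apply exp_le. nra.
Qed.

Lemma UpOut tau gamma s s0 : 0 < tau -> 0 < gamma -> Rad2 tau <= s0 ->
  G tau s * exp (- gamma * Rabs (s - s0)) <=
  Rmax (1 / (s0 - Rad1 tau)) (1 / tau * exp (- gamma * (s0 - Rad2 tau))).
Proof.
  intros ht hg hs0. pose proof (Rad1_pos tau ht). unfold G. rewrite Rad2_eq in *.
  set (r := Rad1 tau) in *. clearbody r.
  destruct (Rlt_dec s r) as [c1|c1].
  - rewrite Rabs_left1 by lra. eapply Rle_trans; [|apply Rmax_r].
    apply Rmult_le_compat.
    * apply Rlt_le, one_div_pos; lra.
    * apply Rlt_le, exp_pos.
    * apply one_div_le; lra.
    * apply exp_le. nra.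
  - destruct (Rle_dec s (r + tau)) as [c2|c2].
    + rewrite Rabs_left1 by lra. eapply Rle_trans; [|apply Rmax_r].
      apply Rmult_le_compat_l. apply Rlt_le, one_div_pos; lra.
      apply exp_le. nra.
    + destruct (Rle_lt_dec s0 s) as [c3|c3].
      * rewrite Rabs_pos_eq by lra. eapply Rle_trans; [|apply Rmax_l].
        rewrite <- (Rmult_1_r (1 / (s0 - r))).
        apply Rmult_le_compat.
        -- apply Rlt_le, one_div_pos; lra.
        -- apply Rlt_le, exp_pos.
        -- apply one_div_le; lra.
        -- rewrite <- exp_0. apply exp_le. nra.
      * rewrite Rabs_left by lra.
        replace (- gamma * - (s - s0)) with (- gamma * (s0 - s)) by ring.
        replace (1 / (s - r) * exp (- gamma * (s0 - s))) with
          (exp (- gamma * (s0 - s)) / (s - r)) by (field; lra).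
        replace (1 / (s0 - r)) with (exp 0 / (s0 - r)) by (rewrite exp_0; reflexivity).
        replace (1 / tau * exp (- gamma * (s0 - (r + tau)))) with (exp (- gamma * (s0 - (r + tau))) / tau) by (field; lra).
        rewrite Rmax_comm.
        apply logconv with (t := (s - (r + tau)) / (s0 - (r + tau))).
        -- split. apply Rmult_le_pos; [lra|]. apply Rlt_le, Rinv_0_lt_compat; lra.
           apply Rmult_le_reg_r with (s0 - (r + tau)). lra. unfold Rdiv. rewrite Rmult_assoc, Rinv_l by lra. lra.
        -- lra.
        -- lra.
        -- field. lra.
        -- field. lra.
Qed.

Lemma G_le_tau tau s : 0 < tau -> G tau s <= 1 / tau.
Proof. intros ht. pose proof (Rad1_pos tau ht). unfold G. rewrite Rad2_eq.
  destruct Rlt_dec. apply one_div_le; lra. destruct Rle_dec. lra. apply one_div_le; lra. Qed.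

Lemma UpMid tau gamma s s0 : 0 < tau -> 0 < gamma ->
  G tau s * exp (- gamma * Rabs (s - s0)) <= 1 / tau.
Proof.
  intros ht hg. rewrite <- (Rmult_1_r (1/tau)). apply Rmult_le_compat.
  apply Rlt_le, G_pos; auto. apply Rlt_le, exp_pos. apply G_le_tau; auto.
  rewrite <- exp_0. apply exp_le. pose proof (Rabs_pos (s - s0)). nra.
Qed.

Lemma Bup T1 T2 tau gamma z V : 0 < tau -> 0 < gamma ->
  (forall s, G tau s * exp (- gamma * Rabs (s - sd T1 T2 tau z)) <= V) ->
  Rbar_le (Bstar T1 T2 tau gamma z) (Finite V).
Proof.
  intros ht hg H. apply B_le; auto. intros w hw.
  eapply Rle_trans; [|apply (H (sd T1 T2 tau w))].
  apply Rmult_le_compat_l. apply Rlt_le, G_pos; auto. apply exp_le.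
  pose proof (sd_lip T1 T2 tau w z). rewrite dist2_sym in H0. nra.
Qed.

Lemma low T1 T2 tau gamma z w w' fw fw' dww dzw x :
  dom T1 T2 tau w -> dom T1 T2 tau w' ->
  f_tau T1 T2 tau w = fw -> f_tau T1 T2 tau w' = fw' ->
  dist2 w w' = dww -> 0 < dww -> dist2 z w = dzw ->
  Rabs (fw - fw') / dww * exp (- gamma * dzw) = x ->
  Rbar_le (Finite x) (Bstar T1 T2 tau gamma z).
Proof.
  intros hw hw' e1 e2 e3 hd e4 e5. subst.
  apply real_ge; auto.
Qed.

Lemma low_max x y b : Rbar_le (Finite x) b -> Rbar_le (Finite y) b -> Rbar_le (Finite (Rmax x y)) b.
Proof. intros. unfold Rmax. destruct Rle_dec; auto. Qed.

Lemma fval T1 T2 tau p s : 0 < tau -> dom T1 T2 tau p -> sd T1 T2 tau p = s ->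
  f_tau T1 T2 tau p = F tau s.
Proof. intros. subst. apply f_eq; auto. Qed.

Definition Prad b1 b2 (z : pt) (r : R) : pt :=
  (b1 - r / dist2 z (b1, b2) * (b1 - fst z), b2 - r / dist2 z (b1, b2) * (b2 - snd z)).

Lemma Prad_dist b1 b2 z r r' : 0 < dist2 z (b1, b2) ->
  dist2 (Prad b1 b2 z r) (Prad b1 b2 z r') = Rabs (r - r').
Proof.
  intros hd. unfold Prad, dist2 at 1. cbn [fst snd].
  set (d := dist2 z (b1, b2)) in *.
  assert (d ^ 2 = (fst z - b1)^2 + (snd z - b2)^2).
  { unfold d, dist2. cbn [fst snd]. rewrite pow2_sqrt; auto.
    pose proof (pow2_ge_0 (fst z - b1)). pose proof (pow2_ge_0 (snd z - b2)). lra. }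
  rewrite <- sqrt_sq_abs. f_equal.
  clearbody d. destruct z as [z1 z2]. cbn [fst snd] in *.
  apply Rmult_eq_reg_r with (d^2). 2: { apply pow_nonzero. lra. }
  replace (((b1 - r / d * (b1 - z1) - (b1 - r' / d * (b1 - z1))) ^ 2 +
   (b2 - r / d * (b2 - z2) - (b2 - r' / d * (b2 - z2))) ^ 2) * d ^ 2)
   with ((r - r')^2 * ((z1 - b1)^2 + (z2 - b2)^2)) by (field; lra).
  rewrite H. ring.
Qed.

Lemma Prad_self b1 b2 z : 0 < dist2 z (b1, b2) -> Prad b1 b2 z (dist2 z (b1, b2)) = z.
Proof.
  intros hd. unfold Prad. destruct z as [z1 z2]. cbn [fst snd].
  unfold Rdiv. rewrite Rinv_r by lra. f_equal; ring.
Qed.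

Lemma Prad_c b1 b2 z r : 0 < dist2 z (b1, b2) -> 0 <= r ->
  dist2 (Prad b1 b2 z r) (b1, b2) = r.
Proof.
  intros hd hr. unfold Prad, dist2 at 1. cbn [fst snd].
  set (d := dist2 z (b1, b2)) in *.
  assert (d ^ 2 = (fst z - b1)^2 + (snd z - b2)^2).
  { unfold d, dist2. cbn [fst snd]. rewrite pow2_sqrt; auto.
    pose proof (pow2_ge_0 (fst z - b1)). pose proof (pow2_ge_0 (snd z - b2)). lra. }
  transitivity (Rabs r); [| apply Rabs_pos_eq; auto]. rewrite <- sqrt_sq_abs. f_equal.
  clearbody d. destruct z as [z1 z2]. cbn [fst snd] in *.
  apply Rmult_eq_reg_r with (d^2). 2: { apply pow_nonzero. lra. }
  replace (((b1 - r / d * (b1 - z1) - b1) ^ 2 + (b2 - r / d * (b2 - z2) - b2) ^ 2) * d ^ 2)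
   with (r^2 * ((z1 - b1)^2 + (z2 - b2)^2)) by (field; lra).
  rewrite H. ring.
Qed.

Lemma Prad_z b1 b2 z r : 0 < dist2 z (b1, b2) ->
  dist2 z (Prad b1 b2 z r) = Rabs (dist2 z (b1, b2) - r).
Proof.
  intros hd. pose proof (Prad_dist b1 b2 z (dist2 z (b1, b2)) r hd) as E.
  rewrite Prad_self in E by auto. exact E.
Qed.

Lemma Prad_quad b1 b2 z r : 0 < dist2 z (b1, b2) -> 0 <= r -> fst z <= b1 -> snd z <= b2 ->
  fst (Prad b1 b2 z r) <= b1 /\ snd (Prad b1 b2 z r) <= b2.
Proof.
  intros hd hr h1 h2. unfold Prad. cbn [fst snd].
  assert (0 <= r / dist2 z (b1, b2)) by (apply Rmult_le_pos; [lra| apply Rlt_le, Rinv_0_lt_compat; lra]).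
  split; nra.
Qed.

Ltac facts T1 T2 tau :=
  pose proof (a1_eq T1 tau); pose proof (a2_eq T2 tau); pose proof (Rad2_eq tau).

Lemma dom_St1 T1 T2 tau x y : 0 < tau ->
  a1 T1 tau - Rad2 tau <= x <= a1 T1 tau - Rad1 tau -> a2 T2 tau < y -> dom T1 T2 tau (x, y).
Proof. intros. facts T1 T2 tau. unfold dom, St1. cbn [fst snd]. right; right; right; right; right; right; right; right; left. lra. Qed.
Lemma dom_St2 T1 T2 tau x y : 0 < tau ->
  a2 T2 tau - Rad2 tau <= y <= a2 T2 tau - Rad1 tau -> a1 T1 tau < x -> dom T1 T2 tau (x, y).
Proof. intros. facts T1 T2 tau. unfold dom, St2. cbn [fst snd]. right; right; right; right; right; right; right; right; right. lra. Qed.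
Lemma dom_Sta T1 T2 tau p : fst p <= a1 T1 tau -> snd p <= a2 T2 tau ->
  Rad1 tau <= dist2 p (c0 T1 T2 tau) <= Rad2 tau -> dom T1 T2 tau p.
Proof. intros. unfold dom, Sta. right; right; right; right; right; right; right; left. tauto. Qed.

Lemma f_quad T1 T2 tau p : 0 < tau -> dom T1 T2 tau p -> fst p <= a1 T1 tau -> snd p <= a2 T2 tau ->
  f_tau T1 T2 tau p = F tau (dist2 p (c0 T1 T2 tau)).
Proof. intros. apply fval; auto. apply sd_quad; auto. Qed.
Lemma f_left T1 T2 tau p : 0 < tau -> dom T1 T2 tau p -> fst p <= a1 T1 tau -> a2 T2 tau <= snd p ->
  f_tau T1 T2 tau p = F tau (a1 T1 tau - fst p).
Proof. intros. apply fval; auto. apply sd_left; auto. Qed.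
Lemma f_bot T1 T2 tau p : 0 < tau -> dom T1 T2 tau p -> a1 T1 tau <= fst p -> snd p <= a2 T2 tau ->
  f_tau T1 T2 tau p = F tau (a2 T2 tau - snd p).
Proof. intros. apply fval; auto. apply sd_bot; auto. Qed.
Lemma f_in T1 T2 tau p : 0 < tau -> dom T1 T2 tau p -> a1 T1 tau <= fst p -> a2 T2 tau <= snd p ->
  f_tau T1 T2 tau p = 1.
Proof. intros. rewrite f_eq by auto. apply F_le. rewrite sd_in by auto.
  pose proof (Rad1_pos tau H). unfold Rmin; destruct Rle_dec; lra. Qed.

Lemma thm_S11 T1 T2 tau gamma z : 0 < tau -> 0 < gamma -> S11 T1 T2 tau z ->
  Bstar T1 T2 tau gamma z =
     Finite (Rmax (1 / (fst z - (T1 - tau/2)))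
                  (1 / tau * exp (- gamma * (fst z - (T1 + tau/2))))).
Proof.
  intros ht hg hz. assert (hd : dom T1 T2 tau z) by (unfold dom; tauto).
  destruct z as [z1 z2]. unfold S11 in hz; cbn [fst snd] in *. destruct hz as [[h1 h2] h3].
  facts T1 T2 tau. pose proof (Rad1_pos tau ht).
  apply Rbar_le_antisym.
  - assert (hs : sd T1 T2 tau (z1, z2) = a1 T1 tau - z1) by (apply sd_left; cbn; lra).
    apply Bup; auto. intros s. rewrite hs. eapply Rle_trans. apply UpIn; auto; lra.
    replace (Rad2 tau - (a1 T1 tau - z1)) with (z1 - (T1 - tau/2)) by lra.
    replace (Rad1 tau - (a1 T1 tau - z1)) with (z1 - (T1 + tau/2)) by lra. lra.
  - apply low_max.
    + apply (low _ _ _ _ _ (z1, z2) (a1 T1 tau - Rad2 tau, z2) 1 0 (z1 - (T1 - tau/2))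
               0 _); auto.
      * apply dom_St1; auto; lra.
      * rewrite f_left by (cbn; auto; lra). apply F_le. cbn; lra.
      * rewrite f_left by (cbn; auto; try apply dom_St1; auto; lra). apply F_ge; auto. cbn; lra.
      * rewrite dist2_h, Rabs_pos_eq; lra.
      * lra.
      * apply dist2_self.
      * rewrite Rmult_0_r, exp_0, Rmult_1_r, Rminus_0_r, Rabs_R1. reflexivity.
    + apply (low _ _ _ _ _ (a1 T1 tau - Rad1 tau, z2) (a1 T1 tau - Rad2 tau, z2) 1 0 tau
               (z1 - (T1 + tau/2)) _); auto.
      * apply dom_St1; auto; lra.
      * apply dom_St1; auto; lra.
      * rewrite f_left by (cbn; auto; try apply dom_St1; auto; lra). apply F_le. cbn; lra.
      * rewrite f_left by (cbn; auto; try apply dom_St1; auto; lra). apply F_ge; auto. cbn; lra.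
      * rewrite dist2_h, Rabs_pos_eq; lra.
      * rewrite dist2_h, Rabs_pos_eq; lra.
      * rewrite Rminus_0_r, Rabs_R1. reflexivity.
Qed.

Lemma thm_S12 T1 T2 tau gamma z : 0 < tau -> 0 < gamma -> S12 T1 T2 tau z ->
  Bstar T1 T2 tau gamma z =
     Finite (Rmax (1 / (snd z - (T2 - tau/2)))
                  (1 / tau * exp (- gamma * (snd z - (T2 + tau/2))))).
Proof.
  intros ht hg hz. assert (hd : dom T1 T2 tau z) by (unfold dom; tauto).
  destruct z as [z1 z2]. unfold S12 in hz; cbn [fst snd] in *. destruct hz as [[h1 h2] h3].
  facts T1 T2 tau. pose proof (Rad1_pos tau ht).
  apply Rbar_le_antisym.
  - assert (hs : sd T1 T2 tau (z1, z2) = a2 T2 tau - z2) by (apply sd_bot; cbn; lra).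
    apply Bup; auto. intros s. rewrite hs. eapply Rle_trans. apply UpIn; auto; lra.
    replace (Rad2 tau - (a2 T2 tau - z2)) with (z2 - (T2 - tau/2)) by lra.
    replace (Rad1 tau - (a2 T2 tau - z2)) with (z2 - (T2 + tau/2)) by lra. lra.
  - apply low_max.
    + apply (low _ _ _ _ _ (z1, z2) (z1, a2 T2 tau - Rad2 tau) 1 0 (z2 - (T2 - tau/2))
               0 _); auto.
      * apply dom_St2; auto; lra.
      * rewrite f_bot by (cbn; auto; lra). apply F_le. cbn; lra.
      * rewrite f_bot by (cbn; auto; try apply dom_St2; auto; lra). apply F_ge; auto. cbn; lra.
      * rewrite dist2_v, Rabs_pos_eq; lra.
      * lra.
      * apply dist2_self.
      * rewrite Rmult_0_r, exp_0, Rmult_1_r, Rminus_0_r, Rabs_R1. reflexivity.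
    + apply (low _ _ _ _ _ (z1, a2 T2 tau - Rad1 tau) (z1, a2 T2 tau - Rad2 tau) 1 0 tau
               (z2 - (T2 + tau/2)) _); auto.
      * apply dom_St2; auto; lra.
      * apply dom_St2; auto; lra.
      * rewrite f_bot by (cbn; auto; try apply dom_St2; auto; lra). apply F_le. cbn; lra.
      * rewrite f_bot by (cbn; auto; try apply dom_St2; auto; lra). apply F_ge; auto. cbn; lra.
      * rewrite dist2_v, Rabs_pos_eq; lra.
      * rewrite dist2_v, Rabs_pos_eq; lra.
      * rewrite Rminus_0_r, Rabs_R1. reflexivity.
Qed.

Lemma abs01 : Rabs (0 - 1) = 1.
Proof. rewrite Rabs_left; lra. Qed.

Lemma thm_S01 T1 T2 tau gamma z : 0 < tau -> 0 < gamma -> S01 T1 T2 tau z ->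
  Bstar T1 T2 tau gamma z =
     Finite (Rmax (1 / (T1 + tau/2 - fst z))
                  (1 / tau * exp (- gamma * (T1 - tau/2 - fst z)))).
Proof.
  intros ht hg hz. assert (hd : dom T1 T2 tau z) by (unfold dom; tauto).
  destruct z as [z1 z2]. unfold S01 in hz; cbn [fst snd] in *. destruct hz as [h1 h3].
  facts T1 T2 tau. pose proof (Rad1_pos tau ht).
  apply Rbar_le_antisym.
  - assert (hs : sd T1 T2 tau (z1, z2) = a1 T1 tau - z1) by (apply sd_left; cbn; lra).
    apply Bup; auto. intros s. rewrite hs. eapply Rle_trans. apply UpOut; auto; lra.
    replace (a1 T1 tau - z1 - Rad1 tau) with (T1 + tau/2 - z1) by lra.
    replace (a1 T1 tau - z1 - Rad2 tau) with (T1 - tau/2 - z1) by lra. lra.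
  - apply low_max.
    + apply (low _ _ _ _ _ (z1, z2) (a1 T1 tau - Rad1 tau, z2) 0 1 (T1 + tau/2 - z1)
               0 _); auto.
      * apply dom_St1; auto; lra.
      * rewrite f_left by (cbn; auto; lra). apply F_ge; auto. cbn; lra.
      * rewrite f_left by (cbn; auto; try apply dom_St1; auto; lra). apply F_le. cbn; lra.
      * rewrite dist2_h, Rabs_left1; lra.
      * lra.
      * apply dist2_self.
      * rewrite Rmult_0_r, exp_0, Rmult_1_r, abs01. reflexivity.
    + apply (low _ _ _ _ _ (a1 T1 tau - Rad2 tau, z2) (a1 T1 tau - Rad1 tau, z2) 0 1 tau
               (T1 - tau/2 - z1) _); auto.
      * apply dom_St1; auto; lra.
      * apply dom_St1; auto; lra.
      * rewrite f_left by (cbn; auto; try apply dom_St1; auto; lra). apply F_ge; auto. cbn; lra.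
      * rewrite f_left by (cbn; auto; try apply dom_St1; auto; lra). apply F_le. cbn; lra.
      * rewrite dist2_h, Rabs_left1; lra.
      * rewrite dist2_h, Rabs_left1; lra.
      * rewrite abs01. reflexivity.
Qed.

Lemma thm_S02 T1 T2 tau gamma z : 0 < tau -> 0 < gamma -> S02 T1 T2 tau z ->
  Bstar T1 T2 tau gamma z =
     Finite (Rmax (1 / (T2 + tau/2 - snd z))
                  (1 / tau * exp (- gamma * (T2 - tau/2 - snd z)))).
Proof.
  intros ht hg hz. assert (hd : dom T1 T2 tau z) by (unfold dom; tauto).
  destruct z as [z1 z2]. unfold S02 in hz; cbn [fst snd] in *. destruct hz as [h1 h3].
  facts T1 T2 tau. pose proof (Rad1_pos tau ht).
  apply Rbar_le_antisym.
  - assert (hs : sd T1 T2 tau (z1, z2) = a2 T2 tau - z2) by (apply sd_bot; cbn; lra).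
    apply Bup; auto. intros s. rewrite hs. eapply Rle_trans. apply UpOut; auto; lra.
    replace (a2 T2 tau - z2 - Rad1 tau) with (T2 + tau/2 - z2) by lra.
    replace (a2 T2 tau - z2 - Rad2 tau) with (T2 - tau/2 - z2) by lra. lra.
  - apply low_max.
    + apply (low _ _ _ _ _ (z1, z2) (z1, a2 T2 tau - Rad1 tau) 0 1 (T2 + tau/2 - z2)
               0 _); auto.
      * apply dom_St2; auto; lra.
      * rewrite f_bot by (cbn; auto; lra). apply F_ge; auto. cbn; lra.
      * rewrite f_bot by (cbn; auto; try apply dom_St2; auto; lra). apply F_le. cbn; lra.
      * rewrite dist2_v, Rabs_left1; lra.
      * lra.
      * apply dist2_self.
      * rewrite Rmult_0_r, exp_0, Rmult_1_r, abs01. reflexivity.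
    + apply (low _ _ _ _ _ (z1, a2 T2 tau - Rad2 tau) (z1, a2 T2 tau - Rad1 tau) 0 1 tau
               (T2 - tau/2 - z2) _); auto.
      * apply dom_St2; auto; lra.
      * apply dom_St2; auto; lra.
      * rewrite f_bot by (cbn; auto; try apply dom_St2; auto; lra). apply F_ge; auto. cbn; lra.
      * rewrite f_bot by (cbn; auto; try apply dom_St2; auto; lra). apply F_le. cbn; lra.
      * rewrite dist2_v, Rabs_left1; lra.
      * rewrite dist2_v, Rabs_left1; lra.
      * rewrite abs01. reflexivity.
Qed.

Lemma thm_S13 T1 T2 tau gamma z : 0 < tau -> 0 < gamma -> S13 T1 T2 tau z ->
  Bstar T1 T2 tau gamma z =
     Finite (Rmax (Rmax (1 / (fst z - (T1 - tau/2)))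
                        (1 / tau * exp (- gamma * (fst z - (T1 + tau/2)))))
                  (Rmax (1 / (snd z - (T2 - tau/2)))
                        (1 / tau * exp (- gamma * (snd z - (T2 + tau/2)))))).
Proof.
  intros ht hg hz. assert (hd : dom T1 T2 tau z) by (unfold dom; tauto).
  destruct z as [z1 z2]. unfold S13 in hz; cbn [fst snd] in *. destruct hz as [h1 h3].
  facts T1 T2 tau. pose proof (Rad1_pos tau ht).
  apply Rbar_le_antisym.
  - assert (hs : sd T1 T2 tau (z1, z2) = - Rmin (z1 - a1 T1 tau) (z2 - a2 T2 tau))
      by (apply sd_in; cbn; lra).
    apply Bup; auto. intros s. rewrite hs. eapply Rle_trans. apply UpIn; auto.
    unfold Rmin; destruct Rle_dec; lra.
    unfold Rmin; destruct Rle_dec.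
    + eapply Rle_trans; [|apply Rmax_l].
      replace (Rad2 tau - - (z1 - a1 T1 tau)) with (z1 - (T1 - tau/2)) by lra.
      replace (Rad1 tau - - (z1 - a1 T1 tau)) with (z1 - (T1 + tau/2)) by lra. lra.
    + eapply Rle_trans; [|apply Rmax_r].
      replace (Rad2 tau - - (z2 - a2 T2 tau)) with (z2 - (T2 - tau/2)) by lra.
      replace (Rad1 tau - - (z2 - a2 T2 tau)) with (z2 - (T2 + tau/2)) by lra. lra.
  - assert (fz : f_tau T1 T2 tau (z1, z2) = 1) by (apply f_in; cbn; auto; lra).
    apply low_max; apply low_max.
    + apply (low _ _ _ _ _ (z1, z2) (a1 T1 tau - Rad2 tau, z2) 1 0 (z1 - (T1 - tau/2))
               0 _); auto.
      * apply dom_St1; auto; lra.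
      * rewrite f_left by (cbn; auto; try apply dom_St1; auto; lra). apply F_ge; auto. cbn; lra.
      * rewrite dist2_h, Rabs_pos_eq; lra.
      * lra.
      * apply dist2_self.
      * rewrite Rmult_0_r, exp_0, Rmult_1_r, Rminus_0_r, Rabs_R1. reflexivity.
    + apply (low _ _ _ _ _ (a1 T1 tau - Rad1 tau, z2) (a1 T1 tau - Rad2 tau, z2) 1 0 tau
               (z1 - (T1 + tau/2)) _); auto.
      * apply dom_St1; auto; lra.
      * apply dom_St1; auto; lra.
      * rewrite f_left by (cbn; auto; try apply dom_St1; auto; lra). apply F_le. cbn; lra.
      * rewrite f_left by (cbn; auto; try apply dom_St1; auto; lra). apply F_ge; auto. cbn; lra.
      * rewrite dist2_h, Rabs_pos_eq; lra.
      * rewrite dist2_h, Rabs_pos_eq; lra.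
      * rewrite Rminus_0_r, Rabs_R1. reflexivity.
    + apply (low _ _ _ _ _ (z1, z2) (z1, a2 T2 tau - Rad2 tau) 1 0 (z2 - (T2 - tau/2))
               0 _); auto.
      * apply dom_St2; auto; lra.
      * rewrite f_bot by (cbn; auto; try apply dom_St2; auto; lra). apply F_ge; auto. cbn; lra.
      * rewrite dist2_v, Rabs_pos_eq; lra.
      * lra.
      * apply dist2_self.
      * rewrite Rmult_0_r, exp_0, Rmult_1_r, Rminus_0_r, Rabs_R1. reflexivity.
    + apply (low _ _ _ _ _ (z1, a2 T2 tau - Rad1 tau) (z1, a2 T2 tau - Rad2 tau) 1 0 tau
               (z2 - (T2 + tau/2)) _); auto.
      * apply dom_St2; auto; lra.
      * apply dom_St2; auto; lra.
      * rewrite f_bot by (cbn; auto; try apply dom_St2; auto; lra). apply F_le. cbn; lra.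
      * rewrite f_bot by (cbn; auto; try apply dom_St2; auto; lra). apply F_ge; auto. cbn; lra.
      * rewrite dist2_v, Rabs_pos_eq; lra.
      * rewrite dist2_v, Rabs_pos_eq; lra.
      * rewrite Rminus_0_r, Rabs_R1. reflexivity.
Qed.

Lemma rad_facts T1 T2 tau z r : 0 < dist2 z (c0 T1 T2 tau) -> 0 <= r ->
  fst z <= a1 T1 tau -> snd z <= a2 T2 tau ->
  let P := Prad (a1 T1 tau) (a2 T2 tau) z r in
  fst P <= a1 T1 tau /\ snd P <= a2 T2 tau /\ dist2 P (c0 T1 T2 tau) = r /\
  dist2 z P = Rabs (dist2 z (c0 T1 T2 tau) - r).
Proof.
  intros hd hr h1 h2 P. unfold c0 in *.
  destruct (Prad_quad _ _ z r hd hr h1 h2). repeat split; auto.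
  apply Prad_c; auto. apply Prad_z; auto.
Qed.

Lemma Pdist T1 T2 tau z r r' : 0 < dist2 z (c0 T1 T2 tau) ->
  dist2 (Prad (a1 T1 tau) (a2 T2 tau) z r) (Prad (a1 T1 tau) (a2 T2 tau) z r') = Rabs (r - r').
Proof. intros. apply Prad_dist; auto. Qed.

Lemma thm_S1a T1 T2 tau gamma z : 0 < tau -> 0 < gamma -> S1a T1 T2 tau z ->
  Bstar T1 T2 tau gamma z =
     Finite (Rmax (1 / (Rad2 tau - dist2 z (c0 T1 T2 tau)))
                  (1 / tau * exp (- gamma * (Rad1 tau - dist2 z (c0 T1 T2 tau))))).
Proof.
  intros ht hg hz. assert (hd : dom T1 T2 tau z) by (unfold dom; tauto).
  unfold S1a in hz. destruct hz as [[h1 h2] [[h3 h4] h5]].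
  facts T1 T2 tau. pose proof (Rad1_pos tau ht).
  assert (hD : 0 < dist2 z (c0 T1 T2 tau)).
  { pose proof (dist2_ge1 z (c0 T1 T2 tau)). change (fst (c0 T1 T2 tau)) with (a1 T1 tau) in H3.
    rewrite Rabs_left in H3 by lra. lra. }
  assert (hs : sd T1 T2 tau z = dist2 z (c0 T1 T2 tau)) by (apply sd_quad; lra).
  assert (fz : f_tau T1 T2 tau z = 1) by (rewrite f_quad by (auto; lra); apply F_le; lra).
  destruct (rad_facts T1 T2 tau z (Rad2 tau) hD ltac:(lra) ltac:(lra) ltac:(lra)) as [p1 [p2 [p3 p4]]].
  destruct (rad_facts T1 T2 tau z (Rad1 tau) hD ltac:(lra) ltac:(lra) ltac:(lra)) as [q1 [q2 [q3 q4]]].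
  pose proof (Pdist T1 T2 tau z (Rad1 tau) (Rad2 tau) hD) as d12.
  set (P2 := Prad (a1 T1 tau) (a2 T2 tau) z (Rad2 tau)) in *.
  set (P1 := Prad (a1 T1 tau) (a2 T2 tau) z (Rad1 tau)) in *.
  clearbody P1 P2.
  set (D := dist2 z (c0 T1 T2 tau)) in *. clearbody D.
  assert (dP2 : dom T1 T2 tau P2) by (apply dom_Sta; auto; lra).
  assert (dP1 : dom T1 T2 tau P1) by (apply dom_Sta; auto; lra).
  assert (fP2 : f_tau T1 T2 tau P2 = 0) by (rewrite f_quad by auto; rewrite p3; apply F_ge; auto; lra).
  assert (fP1 : f_tau T1 T2 tau P1 = 1) by (rewrite f_quad by auto; rewrite q3; apply F_le; lra).
  apply Rbar_le_antisym.
  - apply Bup; auto. intros s. rewrite hs. apply UpIn; auto; lra.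
  - apply low_max.
    + apply (low _ _ _ _ _ z P2 1 0 (Rad2 tau - D) 0 _); auto.
      * rewrite p4, Rabs_left1; lra.
      * lra.
      * apply dist2_self.
      * rewrite Rmult_0_r, exp_0, Rmult_1_r, Rminus_0_r, Rabs_R1. reflexivity.
    + apply (low _ _ _ _ _ P1 P2 1 0 tau (Rad1 tau - D) _); auto.
      * rewrite d12, Rabs_left1; lra.
      * rewrite q4, Rabs_left1; lra.
      * rewrite Rminus_0_r, Rabs_R1. reflexivity.
Qed.

Lemma thm_S0a T1 T2 tau gamma z : 0 < tau -> 0 < gamma -> S0a T1 T2 tau z ->
  Bstar T1 T2 tau gamma z =
     Finite (Rmax (1 / (dist2 z (c0 T1 T2 tau) - Rad1 tau))
                  (1 / tau * exp (- gamma * (dist2 z (c0 T1 T2 tau) - Rad2 tau)))).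
Proof.
  intros ht hg hz. assert (hd : dom T1 T2 tau z) by (unfold dom; tauto).
  unfold S0a in hz. destruct hz as [h1 [h2 h5]].
  facts T1 T2 tau. pose proof (Rad1_pos tau ht).
  assert (hD : 0 < dist2 z (c0 T1 T2 tau)) by lra.
  assert (hs : sd T1 T2 tau z = dist2 z (c0 T1 T2 tau)) by (apply sd_quad; lra).
  assert (fz : f_tau T1 T2 tau z = 0) by (rewrite f_quad by (auto; lra); apply F_ge; auto; lra).
  destruct (rad_facts T1 T2 tau z (Rad2 tau) hD ltac:(lra) ltac:(lra) ltac:(lra)) as [p1 [p2 [p3 p4]]].
  destruct (rad_facts T1 T2 tau z (Rad1 tau) hD ltac:(lra) ltac:(lra) ltac:(lra)) as [q1 [q2 [q3 q4]]].
  pose proof (Pdist T1 T2 tau z (Rad2 tau) (Rad1 tau) hD) as d12.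
  set (P2 := Prad (a1 T1 tau) (a2 T2 tau) z (Rad2 tau)) in *.
  set (P1 := Prad (a1 T1 tau) (a2 T2 tau) z (Rad1 tau)) in *.
  clearbody P1 P2.
  set (D := dist2 z (c0 T1 T2 tau)) in *. clearbody D.
  assert (dP2 : dom T1 T2 tau P2) by (apply dom_Sta; auto; lra).
  assert (dP1 : dom T1 T2 tau P1) by (apply dom_Sta; auto; lra).
  assert (fP2 : f_tau T1 T2 tau P2 = 0) by (rewrite f_quad by auto; rewrite p3; apply F_ge; auto; lra).
  assert (fP1 : f_tau T1 T2 tau P1 = 1) by (rewrite f_quad by auto; rewrite q3; apply F_le; lra).
  apply Rbar_le_antisym.
  - apply Bup; auto. intros s. rewrite hs. apply UpOut; auto; lra.
  - apply low_max.
    + apply (low _ _ _ _ _ z P1 0 1 (D - Rad1 tau) 0 _); auto.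
      * rewrite q4, Rabs_pos_eq; lra.
      * lra.
      * apply dist2_self.
      * rewrite Rmult_0_r, exp_0, Rmult_1_r, abs01. reflexivity.
    + apply (low _ _ _ _ _ P2 P1 0 1 tau (D - Rad2 tau) _); auto.
      * rewrite d12, Rabs_pos_eq; lra.
      * rewrite p4, Rabs_pos_eq; lra.
      * rewrite abs01. reflexivity.
Qed.

Lemma low_mid_line (fz fw' dd : R) tau : 0 < tau -> 0 < dd -> Rabs fz = dd / tau ->
  Rabs (fz - 0) / dd * exp (- 0 * 0) = 1 / tau.
Proof. intros. rewrite Rminus_0_r, H1. replace (- 0 * 0) with 0 by ring. rewrite exp_0. field. lra. Qed.

Lemma thm_mid T1 T2 tau gamma z : 0 < tau -> 0 < gamma ->
  St1 T1 T2 tau z \/ St2 T1 T2 tau z \/ Sta T1 T2 tau z ->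
  Bstar T1 T2 tau gamma z = Finite (1 / tau).
Proof.
  intros ht hg hz. assert (hd : dom T1 T2 tau z) by (unfold dom; tauto).
  facts T1 T2 tau. pose proof (Rad1_pos tau ht).
  apply Rbar_le_antisym.
  { apply Bup; auto. intros s. apply UpMid; auto. }
  destruct hz as [hz|[hz|hz]].
  - destruct z as [z1 z2]. unfold St1 in hz; cbn [fst snd] in hz. destruct hz as [[h1 h2] h3].
    assert (fz : f_tau T1 T2 tau (z1, z2) = F tau (a1 T1 tau - z1)) by (apply f_left; cbn; auto; lra).
    destruct (Req_dec z1 (a1 T1 tau - Rad2 tau)) as [e|e].
    + rewrite F_ge in fz by (auto; lra).
      apply (low _ _ _ _ _ (z1, z2) (a1 T1 tau - Rad1 tau, z2) 0 1 tau 0 _); auto.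
      * apply dom_St1; auto; lra.
      * rewrite f_left by (cbn; auto; try apply dom_St1; auto; lra). apply F_le. cbn; lra.
      * rewrite dist2_h, Rabs_left1; lra.
      * apply dist2_self.
      * rewrite Rmult_0_r, exp_0, Rmult_1_r, abs01. reflexivity.
    + rewrite F_mid in fz by (auto; lra).
      apply (low _ _ _ _ _ (z1, z2) (a1 T1 tau - Rad2 tau, z2) ((Rad2 tau - (a1 T1 tau - z1)) / tau) 0 (z1 - (a1 T1 tau - Rad2 tau)) 0 _); auto.
      * apply dom_St1; auto; lra.
      * rewrite f_left by (cbn; auto; try apply dom_St1; auto; lra). apply F_ge; auto. cbn; lra.
      * rewrite dist2_h, Rabs_pos_eq; lra.
      * lra.
      * apply dist2_self.
      * rewrite Rmult_0_r, exp_0, Rmult_1_r, Rminus_0_r, Rabs_pos_eq.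
        field. split; lra. apply Rmult_le_pos. lra. apply Rlt_le, Rinv_0_lt_compat; lra.
  - destruct z as [z1 z2]. unfold St2 in hz; cbn [fst snd] in hz. destruct hz as [[h1 h2] h3].
    assert (fz : f_tau T1 T2 tau (z1, z2) = F tau (a2 T2 tau - z2)) by (apply f_bot; cbn; auto; lra).
    destruct (Req_dec z2 (a2 T2 tau - Rad2 tau)) as [e|e].
    + rewrite F_ge in fz by (auto; lra).
      apply (low _ _ _ _ _ (z1, z2) (z1, a2 T2 tau - Rad1 tau) 0 1 tau 0 _); auto.
      * apply dom_St2; auto; lra.
      * rewrite f_bot by (cbn; auto; try apply dom_St2; auto; lra). apply F_le. cbn; lra.
      * rewrite dist2_v, Rabs_left1; lra.
      * apply dist2_self.
      * rewrite Rmult_0_r, exp_0, Rmult_1_r, abs01. reflexivity.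
    + rewrite F_mid in fz by (auto; lra).
      apply (low _ _ _ _ _ (z1, z2) (z1, a2 T2 tau - Rad2 tau) ((Rad2 tau - (a2 T2 tau - z2)) / tau) 0 (z2 - (a2 T2 tau - Rad2 tau)) 0 _); auto.
      * apply dom_St2; auto; lra.
      * rewrite f_bot by (cbn; auto; try apply dom_St2; auto; lra). apply F_ge; auto. cbn; lra.
      * rewrite dist2_v, Rabs_pos_eq; lra.
      * lra.
      * apply dist2_self.
      * rewrite Rmult_0_r, exp_0, Rmult_1_r, Rminus_0_r, Rabs_pos_eq.
        field. split; lra. apply Rmult_le_pos. lra. apply Rlt_le, Rinv_0_lt_compat; lra.
  - unfold Sta in hz. destruct hz as [h1 [h2 [h3 h4]]].
    assert (hD : 0 < dist2 z (c0 T1 T2 tau)) by lra.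
    assert (fz : f_tau T1 T2 tau z = F tau (dist2 z (c0 T1 T2 tau))) by (apply f_quad; auto).
    destruct (rad_facts T1 T2 tau z (Rad2 tau) hD ltac:(lra) ltac:(lra) ltac:(lra)) as [p1 [p2 [p3 p4]]].
    destruct (rad_facts T1 T2 tau z (Rad1 tau) hD ltac:(lra) ltac:(lra) ltac:(lra)) as [q1 [q2 [q3 q4]]].
    set (P2 := Prad (a1 T1 tau) (a2 T2 tau) z (Rad2 tau)) in *.
    set (P1 := Prad (a1 T1 tau) (a2 T2 tau) z (Rad1 tau)) in *.
    clearbody P1 P2.
    set (D := dist2 z (c0 T1 T2 tau)) in *. clearbody D.
    assert (dP2 : dom T1 T2 tau P2) by (apply dom_Sta; auto; lra).
    assert (dP1 : dom T1 T2 tau P1) by (apply dom_Sta; auto; lra).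
    assert (fP2 : f_tau T1 T2 tau P2 = 0) by (rewrite f_quad by auto; rewrite p3; apply F_ge; auto; lra).
    assert (fP1 : f_tau T1 T2 tau P1 = 1) by (rewrite f_quad by auto; rewrite q3; apply F_le; lra).
    destruct (Req_dec D (Rad2 tau)) as [e|e].
    + rewrite F_ge in fz by (auto; lra).
      apply (low _ _ _ _ _ z P1 0 1 tau 0 _); auto.
      * rewrite q4, Rabs_pos_eq; lra.
      * apply dist2_self.
      * rewrite Rmult_0_r, exp_0, Rmult_1_r, abs01. reflexivity.
    + rewrite F_mid in fz by (auto; lra).
      apply (low _ _ _ _ _ z P2 ((Rad2 tau - D) / tau) 0 (Rad2 tau - D) 0 _); auto.
      * rewrite p4, Rabs_left1; lra.
      * lra.
      * apply dist2_self.
      * rewrite Rmult_0_r, exp_0, Rmult_1_r, Rminus_0_r, Rabs_pos_eq.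
        field. split; lra. apply Rmult_le_pos. lra. apply Rlt_le, Rinv_0_lt_compat; lra.
Qed.

Theorem mainTheorem10 (T1 T2 tau gamma : R)
  (hT1 : 0 < T1) (hT2 : 0 < T2) (htau0 : 0 < tau)
  (htau1 : tau < 2 * Rmin T1 T2) (hgamma : 0 < gamma) :
  let B := Bstar T1 T2 tau gamma in
  let d := fun z => dist2 z (c0 T1 T2 tau) in
  (forall z, S01 T1 T2 tau z -> B z =
     Finite (Rmax (1 / (T1 + tau/2 - fst z))
                  (1 / tau * exp (- gamma * (T1 - tau/2 - fst z))))) /\
  (forall z, S02 T1 T2 tau z -> B z =
     Finite (Rmax (1 / (T2 + tau/2 - snd z))
                  (1 / tau * exp (- gamma * (T2 - tau/2 - snd z))))) /\
  (forall z, S0a T1 T2 tau z -> B z =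
     Finite (Rmax (1 / (d z - Rad1 tau))
                  (1 / tau * exp (- gamma * (d z - Rad2 tau))))) /\
  (forall z, S11 T1 T2 tau z -> B z =
     Finite (Rmax (1 / (fst z - (T1 - tau/2)))
                  (1 / tau * exp (- gamma * (fst z - (T1 + tau/2)))))) /\
  (forall z, S12 T1 T2 tau z -> B z =
     Finite (Rmax (1 / (snd z - (T2 - tau/2)))
                  (1 / tau * exp (- gamma * (snd z - (T2 + tau/2)))))) /\
  (forall z, S13 T1 T2 tau z -> B z =
     Finite (Rmax (Rmax (1 / (fst z - (T1 - tau/2)))
                        (1 / tau * exp (- gamma * (fst z - (T1 + tau/2)))))
                  (Rmax (1 / (snd z - (T2 - tau/2)))
                        (1 / tau * exp (- gamma * (snd z - (T2 + tau/2))))))) /\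
  (forall z, S1a T1 T2 tau z -> B z =
     Finite (Rmax (1 / (Rad2 tau - d z))
                  (1 / tau * exp (- gamma * (Rad1 tau - d z))))) /\
  (forall z, St1 T1 T2 tau z \/ St2 T1 T2 tau z \/ Sta T1 T2 tau z ->
     B z = Finite (1 / tau)).

Proof.
  intros B d. unfold B, d. clear B d.
  pose proof (Rmin_l T1 T2).
  repeat split; intros z hz.
  - apply thm_S01; auto.
  - apply thm_S02; auto.
  - apply thm_S0a; auto.
  - apply thm_S11; auto.
  - apply thm_S12; auto.
  - apply thm_S13; auto.
  - apply thm_S1a; auto.
  - apply thm_mid; auto.
Qed.
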